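(* (Soundness.) If $t\in\mathtt T_J$ is typable in $\cap J$, i.e. $\Gamma\vdash t:\sigma$ is derivable for some environment $\Gamma$ and type $\sigma$, then $t\in SN_{d\beta}$.
   Context: Terms $\mathtt T_J$: $t,u,r ::= x \mid \lambda x.t \mid t(u,y.r)$ ($y$ bound in $r$), up to $\alpha$-equivalence; $\{u/x\}t$ capture-avoiding substitution. List contexts $\mathtt D ::= \Diamond \mid t(u,y.\mathtt D)$. Distant beta: $\mathtt D\langle\lambda x.t\rangle(u,y.r) \mapsto_{d\beta} \{\{u/x\}\mathtt D\langle t\rangle/y\}r$ (variables bound by $\mathtt D$ not free in $u$, $x$ not in $\mathtt D$), $\to_{d\beta}$ its closure under all contexts; $SN_{d\beta}$ the set of terms with no infinite $\to_{d\beta}$-sequence. System $\cap J$: types $\sigma,\tau ::= \alpha \mid \mathcal M\to\sigma$, $\mathcal M=[\sigma_i]_{i\in I}$ a finite possibly empty multiset; $\sqcup$ multiset union; environments map variables to multisets, $\wedge$ pointwise union, $\Gamma;x:\mathcal M$ extension with $x\notin\mathrm{dom}\,\Gamma$. $\mathrm{ch}(\mathcal M)=\mathcal M$ if $\mathcal M\ne[\,]$, $\mathrm{ch}([\,])=[\tau]$ for an arbitrary $\tau$. Rules: (var) $x:[\sigma]\vdash x:\sigma$; (abs) from $\Gamma;x:\mathcal M\vdash t:\sigma$ infer $\Gamma\vdash\lambda x.t:\mathcal M\to\sigma$; (many) from $(\Gamma_i\vdash t:\sigma_i)_{i\in I}$, $I\ne\emptyset$, infer $\wedge_i\Gamma_i\vdash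 t:[\sigma_i]_{i\in I}$; (app) from $\Gamma\vdash t:\mathrm{ch}([\mathcal M_i\to\tau_i]_{i\in I})$, $\Delta\vdash u:\mathrm{ch}(\sqcup_i\mathcal M_i)$, $\Lambda;y:[\tau_i]_{i\in I}\vdash r:\sigma$ infer $\Gamma\wedge\Delta\wedge\Lambda\vdash t(u,y.r):\sigma$. *)

(* Defs.v *)
From Stdlib Require Import List Arith Permutation.
Import ListNotations.

(* t, u, r ::= x | \x.t | t(u, y.r)   ; in [App t u r], index 0 of r is y *)
Inductive term : Type :=
| Var : nat -> term
| Lam : term -> term
| App : term -> term -> term -> term.

Fixpoint shift (d c : nat) (t : term) : term :=
  match t with
  | Var n => if n <? c then Var n else Var (n + d)
  | Lam t => Lam (shift d (S c) t)
  | App t u r => App (shift d c t) (shift d c u) (shift d (S c) r)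
  end.

Fixpoint subst (k : nat) (s : term) (t : term) : term :=
  match t with
  | Var n => if n =? k then shift k 0 s
             else if k <? n then Var (n - 1) else Var n
  | Lam t => Lam (subst (S k) s t)
  | App t u r => App (subst k s t) (subst k s u) (subst (S k) s r)
  end.

Definition subst0 (s t : term) : term := subst 0 s t.

(* list contexts  D ::= <> | t(u, y.D) ; a layer (a,b) stands for a(b, y. _) *)
Definition lctx := list (term * term).

Fixpoint plug (D : lctx) (t : term) : term :=
  match D with
  | [] => t
  | (a, b) :: D' => App a b (plug D' t)
  end.

(* distant beta:  D<\x.t>(u, y.r) |-> {{u/x} D<t> / y} r.
   The body t lives under the |D| binders of D and the binder x (index 0);
   u is shifted past the binders of D (no capture). *)
Inductive dbeta_root : term -> term -> Prop :=
| root_dbeta (D : lctx) (t u r : term) :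
    dbeta_root (App (plug D (Lam t)) u r)
               (subst0 (plug D (subst0 (shift (length D) 0 u) t)) r).

Inductive dbeta : term -> term -> Prop :=
| db_root t t' : dbeta_root t t' -> dbeta t t'
| db_lam t t' : dbeta t t' -> dbeta (Lam t) (Lam t')
| db_app1 t t' u r : dbeta t t' -> dbeta (App t u r) (App t' u r)
| db_app2 t u u' r : dbeta u u' -> dbeta (App t u r) (App t u' r)
| db_app3 t u r r' : dbeta r r' -> dbeta (App t u r) (App t u r').

Definition SN_dbeta (t : term) : Prop :=
  ~ exists f : nat -> term, f 0 = t /\ forall n, dbeta (f n) (f (S n)).

(* Types  sigma ::= alpha | M -> sigma, with M a finite multiset of types.
   Multisets are represented by lists, taken up to (deep) permutation: teq / meq. *)
Inductive ty : Type :=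
| TVar : nat -> ty
| Arr : list ty -> ty -> ty.

Inductive teq : ty -> ty -> Prop :=
| teq_var a : teq (TVar a) (TVar a)
| teq_arr M N s s' :
    (exists P, Permutation M P /\ Forall2 teq P N) -> teq s s' -> teq (Arr M s) (Arr N s').

Definition meq (M N : list ty) : Prop :=
  exists P, Permutation M P /\ Forall2 teq P N.

Definition env := nat -> list ty.

Definition envEq (G G' : env) : Prop := forall n, meq (G n) (G' n).

Definition env_union (G G' : env) : env := fun n => G n ++ G' n.

(* G ; x : M  -- x is the newly bound variable (index 0), G the outer environment *)
Definition env_ext (M : list ty) (G : env) : env :=
  fun n => match n with 0 => M | S m => G m end.

Definition env_single (x : nat) (s : ty) : env :=
  fun n => if n =? x then [s] else [].

(* A represents ch(M):  ch(M) = M if M <> [], ch([]) = [tau] for an arbitrary tau *)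
Definition ch_rel (M A : list ty) : Prop :=
  (M <> [] /\ meq A M) \/ (M = [] /\ exists tau, A = [tau]).

(* Typing of cap-J.  Conclusions are taken up to equality of environments/types as
   multisets (envEq/teq); many-judgments  G |- t : [s_i]_{i in I}, I nonempty. *)
Inductive typ : env -> term -> ty -> Prop :=
| typ_var G x s :
    envEq G (env_single x s) -> typ G (Var x) s
| typ_abs G G' t M s s' :
    typ (env_ext M G) t s -> envEq G' G -> teq s' (Arr M s) ->
    typ G' (Lam t) s'
| typ_app G L Ga De La t u r A B s s' :
    (* L = [(M_i, tau_i)]_{i in I} *)
    ch_rel (map (fun p => Arr (fst p) (snd p)) L) A ->
    many Ga t A ->
    ch_rel (concat (map fst L)) B ->
    many De u B ->
    typ (env_ext (map snd L) La) r s ->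
    envEq G (env_union Ga (env_union De La)) ->
    teq s' s ->
    typ G (App t u r) s'
  with many : env -> term -> list ty -> Prop :=
| many_one G t s : typ G t s -> many G t [s]
| many_cons G1 G2 t s M :
    typ G1 t s -> many G2 t M -> many (env_union G1 G2) t (s :: M).

(* Main.v *)
Require Import Defs.
From Stdlib Require Import List Arith Permutation Lia Setoid Morphisms Wf_nat.
Import ListNotations.

Fixpoint tsize (a : ty) : nat :=
  match a with TVar _ => 1 | Arr M s => S (tsize s + list_sum (map tsize M)) end.

Lemma tsize_in x M s : In x M -> tsize x < tsize (Arr M s).
Proof.
  simpl. intro H. induction M as [|y M IH]; simpl in *. contradiction.
  destruct H as [<-|H]. lia. specialize (IH H). lia.
Qed.

Fixpoint teq_refl a : teq a a :=
  match a with
  | TVar n => teq_var n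
  | Arr M s => teq_arr M M s s (ex_intro _ M (conj (Permutation_refl M)
      ((fix F l := match l return Forall2 teq l l with
                   | [] => Forall2_nil _
                   | x :: l => Forall2_cons _ _ (teq_refl x) (F l) end) M)))
      (teq_refl s)
  end.

Lemma Forall2_flip_in {A} (R R' : A -> A -> Prop) l m :
  Forall2 R l m -> (forall x y, In x l -> R x y -> R' y x) -> Forall2 R' m l.
Proof. induction 1; intros H'; constructor.
  apply H'; simpl; auto. apply IHForall2. intros; apply H'; simpl; auto. Qed.

Lemma Forall2_trans_in {A} (R : A -> A -> Prop) l m o :
  Forall2 R l m -> Forall2 R m o ->
  (forall x y z, In x l -> R x y -> R y z -> R x z) -> Forall2 R l o.
Proof. intros H; revert o; induction H; intros o H2 H'; inversion H2; subst; constructor.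
  eapply H'; simpl; eauto. apply IHForall2; auto. intros; eapply H'; simpl; eauto. Qed.

Lemma teq_sym_aux k : forall a, tsize a < k -> forall b, teq a b -> teq b a.
Proof.
  induction k; intros a Ha b H. lia.
  destruct H as [n|M N s s' [P [HP HF]] Hs]. constructor.
  constructor; [|apply (IHk s); simpl in Ha; auto; lia].
  assert (HF' : Forall2 teq N P).
  { apply Forall2_flip_in with (1 := HF). intros x y Hx Hxy.
    apply (IHk x); auto. apply Permutation_sym in HP.
    apply (Permutation_in _ HP) in Hx. apply (tsize_in x M s) in Hx. lia. }
  destruct (Permutation_Forall2 (Permutation_sym HP) (Forall2_flip_in _ (fun x y => teq y x) _ _ HF' (fun x y _ h => h)))
    as [Q [HQ1 HQ2]].
  exists Q. split; auto. apply Forall2_flip_in with (1 := HQ2). auto.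
Qed.

Lemma teq_sym a b : teq a b -> teq b a.
Proof. apply (teq_sym_aux (S (tsize a))). lia. Qed.

Lemma teq_trans_aux k : forall a, tsize a < k -> forall b c, teq a b -> teq b c -> teq a c.
Proof.
  induction k; intros a Ha b c H1 H2. lia.
  destruct H1 as [n|M N s s' [P [HP HF]] Hs]. exact H2.
  inversion H2 as [|N' O s1 s2 [Q [HQ HG]] Hs2]; subst.
  constructor; [|apply (IHk s) with (b := s'); simpl in Ha; auto; lia].
  destruct (Permutation_Forall2 HQ (Forall2_flip_in _ (fun x y => teq y x) _ _ HF (fun x y _ h => h)))
    as [P' [HP' HF']].
  exists P'. split. eapply Permutation_trans; eauto.
  apply Forall2_trans_in with (m := Q).
  apply Forall2_flip_in with (1 := HF'). auto. auto.
  intros x y z Hx. apply (IHk x). apply Permutation_sym in HP'.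
  apply (Permutation_in _ HP') in Hx. apply Permutation_sym in HP.
  apply (Permutation_in _ HP) in Hx. apply (tsize_in x M s) in Hx. simpl in *. lia.
Qed.

Lemma teq_trans a b c : teq a b -> teq b c -> teq a c.
Proof. apply (teq_trans_aux (S (tsize a))). lia. Qed.

Lemma Forall2_teq_refl l : Forall2 teq l l.
Proof. induction l; constructor; auto using teq_refl. Qed.

Lemma meq_refl M : meq M M.
Proof. exists M. split; auto using Forall2_teq_refl. Qed.

Lemma meq_sym M N : meq M N -> meq N M.
Proof.
  intros [P [HP HF]].
  destruct (Permutation_Forall2 (Permutation_sym HP) HF) as [Q [HQ1 HQ2]].
  exists Q. split; auto. apply Forall2_flip_in with (1 := HQ2). intros; apply teq_sym; auto.
Qed.

Lemma meq_trans M N O : meq M N -> meq N O -> meq M O.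
Proof.
  intros [P [HP HF]] [Q [HQ HG]].
  destruct (Permutation_Forall2 HQ (Forall2_flip_in _ (fun x y => teq y x) _ _ HF (fun x y _ h => h)))
    as [P' [HP' HF']].
  exists P'. split. eapply Permutation_trans; eauto.
  apply Forall2_trans_in with (m := Q).
  apply Forall2_flip_in with (1 := HF'). auto. auto.
  intros; eapply teq_trans; eauto.
Qed.

Lemma perm_meq M N : Permutation M N -> meq M N.
Proof. intros; exists N; split; auto using Forall2_teq_refl. Qed.

Lemma meq_app M N M' N' : meq M M' -> meq N N' -> meq (M ++ N) (M' ++ N').
Proof.
  intros [P [HP HF]] [Q [HQ HG]]. exists (P ++ Q). split.
  apply Permutation_app; auto. apply Forall2_app; auto.
Qed.

Lemma meq_nil_l M : meq [] M -> M = [].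
Proof. intros [P [HP HF]]. apply Permutation_nil in HP. subst. inversion HF; auto. Qed.
Lemma meq_nil_r M : meq M [] -> M = [].
Proof. intros H. apply meq_sym in H. apply meq_nil_l; auto. Qed.

Lemma meq_length M N : meq M N -> length M = length N.
Proof. intros [P [HP HF]]. rewrite (Permutation_length HP). eapply Forall2_length; eauto. Qed.

Lemma meq_single a b : teq a b -> meq [a] [b].
Proof. intros; exists [a]; split; auto. Qed.

Lemma meq_single_inv a M : meq [a] M -> exists b, M = [b] /\ teq a b.
Proof. intros [P [HP HF]]. apply Permutation_length_1_inv in HP. subst.
  inversion HF; subst. inversion H3; subst. eauto. Qed.

#[export] Instance meq_Equiv : Equivalence meq.
Proof. split. exact meq_refl. exact meq_sym. exact meq_trans. Qed.
#[export] Instance app_meq_Proper : Proper (meq ==> meq ==> meq) (@app ty).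
Proof. intros ? ? ? ? ? ?; apply meq_app; auto. Qed.
#[export] Instance teq_Equiv : Equivalence teq.
Proof. split. exact teq_refl. exact teq_sym. exact teq_trans. Qed.

Fixpoint ty_eq_dec (a b : ty) : {a = b} + {a <> b}.
Proof.
  decide equality. apply Nat.eq_dec.
  revert l0. induction l as [|x l IH]; intros [|y l0]; try (left; reflexivity); try (right; discriminate).
  destruct (ty_eq_dec x y); [subst|right; congruence].
  destruct (IH l0); [subst; left; reflexivity|right; congruence].
Defined.

Definition empty : env := fun _ => [].
Definition dropE (k : nat) (G : env) : env := fun n => if n <? k then G n else G (S n).
Definition shiftE (d c : nat) (G : env) : env :=
  fun n => if n <? c then G n else if n <? c + d then [] else G (n - d).

Lemma envEq_refl G : envEq G G. Proof. intro; reflexivity. Qed.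
#[export] Instance envEq_Equiv : Equivalence envEq.
Proof. split. intros G n; reflexivity. intros G H E n; symmetry; auto.
  intros G H K E1 E2 n; etransitivity; eauto. Qed.
#[export] Instance union_Proper : Proper (envEq ==> envEq ==> envEq) env_union.
Proof. intros G G' E H H' E' n; unfold env_union; rewrite (E n), (E' n); reflexivity. Qed.
#[export] Instance ext_Proper : Proper (meq ==> envEq ==> envEq) env_ext.
Proof. intros M M' E G G' E' [|n]; simpl; auto. Qed.
#[export] Instance dropE_Proper k : Proper (envEq ==> envEq) (dropE k).
Proof. intros G G' E n; unfold dropE; destruct (n <? k); auto. Qed.
#[export] Instance shiftE_Proper d c : Proper (envEq ==> envEq) (shiftE d c).
Proof. intros G G' E n; unfold shiftE; destruct (n <? c); auto; destruct (n <? c + d); auto; reflexivity. Qed.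

Ltac env_ac := let i := fresh "i" in
  intro i; unfold env_union, empty; apply perm_meq;
  apply (Permutation_count_occ ty_eq_dec); let x := fresh "x" in intro x;
  repeat rewrite count_occ_app; simpl; lia.

Lemma union_empty_r G : envEq (env_union G empty) G.
Proof. intro; unfold env_union, empty; rewrite app_nil_r; reflexivity. Qed.
Lemma union_empty_l G : envEq (env_union empty G) G.
Proof. intro; reflexivity. Qed.

Lemma ext_union M N G H : envEq (env_union (env_ext M G) (env_ext N H)) (env_ext (M ++ N) (env_union G H)).
Proof. intros [|n]; reflexivity. Qed.

Lemma ext_nil_empty : envEq (env_ext [] empty) empty.
Proof. intros [|n]; reflexivity. Qed.

Lemma shiftE_union d c G H : envEq (shiftE d c (env_union G H)) (env_union (shiftE d c G) (shiftE d c H)).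
Proof. intro n; unfold shiftE, env_union; destruct (n <? c); [reflexivity|]; destruct (n <? c + d); reflexivity. Qed.
Lemma dropE_union k G H : envEq (dropE k (env_union G H)) (env_union (dropE k G) (dropE k H)).
Proof. intro n; unfold dropE, env_union; destruct (n <? k); reflexivity. Qed.
Lemma shiftE_empty d c : envEq (shiftE d c empty) empty.
Proof. intro n; unfold shiftE, empty; destruct (n <? c); [reflexivity|]; destruct (n <? c + d); reflexivity. Qed.
Lemma dropE_empty k : envEq (dropE k empty) empty.
Proof. intro n; unfold dropE, empty; destruct (n <? k); reflexivity. Qed.

Ltac ltb_cases := repeat match goal with |- context [?a <? ?b] => destruct (Nat.ltb_spec a b) end.

Lemma shiftE_ext d c M G : envEq (shiftE d (S c) (env_ext M G)) (env_ext M (shiftE d c G)).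
Proof.
  intros [|n]; unfold shiftE; cbn [env_ext]. ltb_cases; try reflexivity; lia.
  ltb_cases; try reflexivity; try lia.
  replace (S n - d) with (S (n - d)) by lia. reflexivity.
Qed.

Lemma shiftE_single d c x s :
  envEq (shiftE d c (env_single x s)) (env_single (if x <? c then x else x + d) s).
Proof.
  intro n; unfold shiftE, env_single.
  destruct (x <? c) eqn:Ex; destruct (n <? c) eqn:E1; try destruct (n <? c + d) eqn:E2;
  repeat match goal with H : (_ <? _) = _ |- _ => first [apply Nat.ltb_lt in H | apply Nat.ltb_ge in H] end;
  repeat match goal with |- context [?a =? ?b] => destruct (Nat.eqb_spec a b) end;
  try reflexivity; lia.
Qed.

Lemma shiftE_00 H : envEq (shiftE 0 0 H) H.
Proof. intro n; unfold shiftE; simpl. rewrite Nat.sub_0_r; reflexivity. Qed.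

Lemma shiftE_S0 d H : envEq (shiftE (S d) 0 H) (env_ext [] (shiftE d 0 H)).
Proof.
  intros [|n]; unfold shiftE; cbn [env_ext]; ltb_cases; try reflexivity; try lia.
  all: try (replace (S n - S d) with (n - d) by lia; reflexivity).
Qed.

Lemma shiftE_ext_nil d H : envEq (shiftE d 0 (env_ext [] H)) (shiftE (S d) 0 H).
Proof.
  intro n; unfold shiftE; ltb_cases; try reflexivity; try lia.
  replace (n - d) with 0 by lia. reflexivity.
  replace (n - d) with (S (n - S d)) by lia. reflexivity.
Qed.

Lemma dropE_ext k M G : envEq (dropE (S k) (env_ext M G)) (env_ext M (dropE k G)).
Proof. intros [|n]; unfold dropE; cbn [env_ext]; ltb_cases; try reflexivity; lia. Qed.

Lemma dropE_0_ext M G : envEq (dropE 0 (env_ext M G)) G.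
Proof. intro n; reflexivity. Qed.

Lemma dropE_single_eq k s : envEq (dropE k (env_single k s)) empty.
Proof.
  intro n; unfold dropE, env_single, empty.
  destruct (n <? k) eqn:E1;
  repeat match goal with H : (_ <? _) = _ |- _ => first [apply Nat.ltb_lt in H | apply Nat.ltb_ge in H] end;
  repeat match goal with |- context [?a =? ?b] => destruct (Nat.eqb_spec a b) end;
  try reflexivity; lia.
Qed.

Lemma dropE_single_neq k x s : x <> k ->
  envEq (dropE k (env_single x s)) (env_single (if k <? x then x - 1 else x) s).
Proof.
  intros Hx n; unfold dropE, env_single.
  destruct (n <? k) eqn:E1; destruct (k <? x) eqn:E2;
  repeat match goal with H : (_ <? _) = _ |- _ => first [apply Nat.ltb_lt in H | apply Nat.ltb_ge in H] end;
  repeat match goal with |- context [?a =? ?b] => destruct (Nat.eqb_spec a b) end;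
  try reflexivity; lia.
Qed.

Definition arrs (L : list (list ty * ty)) := map (fun p => Arr (fst p) (snd p)) L.

Inductive T : nat -> env -> term -> ty -> Prop :=
| T_var G J x s : envEq G (env_union (env_single x s) J) -> T 1 G (Var x) s
| T_abs n G G' t M s s' : T n (env_ext M G) t s -> envEq G' G -> teq s' (Arr M s) -> T (S n) G' (Lam t) s'
| T_app n1 n2 n3 G L Ga De La t u r A B s s' :
    ch_rel (arrs L) A ->
    Ms n1 Ga t A -> ch_rel (concat (map fst L)) B -> Ms n2 De u B ->
    T n3 (env_ext (map snd L) La) r s ->
    envEq G (env_union Ga (env_union De La)) -> teq s' s ->
    T (S (n1 + n2 + n3)) G (App t u r) s'
with Ms : nat -> env -> term -> list ty -> Prop :=
| Ms_nil G t : envEq G empty -> Ms 0 G t []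
| Ms_cons n m G1 G2 G t s M : T n G1 t s -> Ms m G2 t M -> envEq G (env_union G1 G2) -> Ms (n + m) G t (s :: M).

Scheme T_mut := Induction for T Sort Prop with Ms_mut := Induction for Ms Sort Prop.

Lemma T_envEq n G t s G' : T n G t s -> envEq G G' -> T n G' t s.
Proof.
  intros H E; destruct H.
  - eapply T_var. rewrite <- E; eauto.
  - eapply T_abs; eauto. rewrite <- E; auto.
  - eapply T_app; eauto. rewrite <- E; auto.
Qed.

Lemma Ms_envEq n G t A G' : Ms n G t A -> envEq G G' -> Ms n G' t A.
Proof.
  intros H E; destruct H.
  - apply Ms_nil. rewrite <- E; auto.
  - eapply Ms_cons; eauto. rewrite <- E; auto.
Qed.

Lemma single_teq x s s' : teq s s' -> envEq (env_single x s) (env_single x s').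
Proof. intros H n; unfold env_single; destruct (n =? x). apply meq_single; auto. reflexivity. Qed.

Lemma T_teq n G t s s' : T n G t s -> teq s s' -> T n G t s'.
Proof.
  intros H E; destruct H.
  - eapply T_var. rewrite H. rewrite (single_teq x s s' E). reflexivity.
  - eapply T_abs; eauto. rewrite <- E; auto.
  - eapply T_app; eauto. rewrite <- E; auto.
Qed.

Lemma Ms_perm A A' : Permutation A A' -> forall n G t, Ms n G t A -> Ms n G t A'.
Proof.
  induction 1; intros n G t HM; auto.
  - inversion HM as [|k m G1 G2 G' t' s M HT HM' E]; subst. eapply Ms_cons; eauto.
  - inversion HM as [|k m G1 G2 G' t' s M HT HM' E]; subst.
    inversion HM' as [|k' m' G1' G2' G'' t'' s' M' HT' HM'' E']; subst.
    replace (k + (k' + m')) with (k' + (k + m')) by lia.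
    eapply Ms_cons; eauto. eapply Ms_cons; eauto. reflexivity.
    rewrite E, E'. env_ac.
Qed.

Lemma Ms_F2 A A' : Forall2 teq A A' -> forall n G t, Ms n G t A -> Ms n G t A'.
Proof.
  induction 1; intros n G t HM; auto.
  inversion HM as [|k m G1 G2 G' t' s M HT HM' E]; subst. eapply Ms_cons; eauto. eapply T_teq; eauto.
Qed.

Lemma Ms_meq A A' n G t : Ms n G t A -> meq A A' -> Ms n G t A'.
Proof. intros HM [P [HP HF]]. eapply Ms_F2; eauto. eapply Ms_perm; eauto. Qed.

Lemma Ms_split A1 A2 n G t : Ms n G t (A1 ++ A2) ->
  exists n1 n2 G1 G2, n = n1 + n2 /\ envEq G (env_union G1 G2) /\ Ms n1 G1 t A1 /\ Ms n2 G2 t A2.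
Proof.
  revert n G; induction A1; intros n G HM; simpl in *.
  - exists 0, n, empty, G. split; auto. split. symmetry; apply union_empty_l.
    split; auto. constructor; reflexivity.
  - inversion HM as [|k m G1 G2' G' t' s M HT HM' E0]; subst. destruct (IHA1 _ _ HM') as (k1 & k2 & H1 & H2 & -> & E & M1 & M2).
    exists (k + k1), k2, (env_union G1 H1), H2. split. lia. split.
    rewrite E0, E. env_ac. split; auto. eapply Ms_cons; eauto; reflexivity.
Qed.

Lemma Ms_join A1 A2 n1 n2 G1 G2 t : Ms n1 G1 t A1 -> Ms n2 G2 t A2 -> Ms (n1 + n2) (env_union G1 G2) t (A1 ++ A2).
Proof.
  intros H1; revert n2 G2; induction H1 as [G0 t0 e|k m K1 K2 K t0 s M HT HM IH e]; intros n2 G2 H2; simpl.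
  - eapply Ms_envEq; eauto. rewrite e. symmetry. apply union_empty_l.
  - rewrite <- Nat.add_assoc. eapply Ms_cons; [exact HT | apply IH; exact H2 | rewrite e; env_ac].
Qed.

Lemma T_weak n G t s : T n G t s -> forall H, T n (env_union G H) t s.
Proof.
  induction 1 as [G J x s E|n G G' t M s s' HT IHT E Hs|n1 n2 n3 G L Ga De La t u r A B s s' HA HMa HB HMb HT IHT E Hs];
    intros K.
  - eapply T_var. rewrite E. instantiate (1 := env_union J K). env_ac.
  - pose proof (IHT (env_ext [] K)) as H1.
    apply T_envEq with (G' := env_ext M (env_union G K)) in H1.
    eapply T_abs; [exact H1 | rewrite E; reflexivity | exact Hs].
    rewrite ext_union, app_nil_r. reflexivity.
  - pose proof (IHT (env_ext [] K)) as H1.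
    apply T_envEq with (G' := env_ext (map snd L) (env_union La K)) in H1.
    eapply T_app; [exact HA|exact HMa|exact HB|exact HMb|exact H1| |exact Hs].
    rewrite E. env_ac.
    rewrite ext_union, app_nil_r. reflexivity.
Qed.

Combined Scheme TMs_mut from T_mut, Ms_mut.

#[export] Instance T_Proper : Proper (eq ==> envEq ==> eq ==> eq ==> iff) T.
Proof. intros n n' <- G G' E t t' <- s s' <-. split; intro H; eapply T_envEq; eauto. symmetry; auto. Qed.
#[export] Instance Ms_Proper : Proper (eq ==> envEq ==> eq ==> eq ==> iff) Ms.
Proof. intros n n' <- G G' E t t' <- s s' <-. split; intro H; eapply Ms_envEq; eauto. symmetry; auto. Qed.

Lemma T_shift_all :
  (forall n G t s, T n G t s -> forall d c, T n (shiftE d c G) (shift d c t) s) /\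
  (forall n G t A, Ms n G t A -> forall d c, Ms n (shiftE d c G) (shift d c t) A).
Proof.
  apply (TMs_mut (fun n G t s _ => forall d c, T n (shiftE d c G) (shift d c t) s)
                 (fun n G t A _ => forall d c, Ms n (shiftE d c G) (shift d c t) A)).
  - intros G J x s E d c; simpl. rewrite E, shiftE_union, shiftE_single.
    destruct (x <? c); eapply T_var with (J := shiftE d c J); reflexivity.
  - intros n G G' t M s s' HT IH E Hs d c; simpl; eapply T_abs;
       [apply T_envEq with (1 := IH d (S c)); apply shiftE_ext | rewrite E; reflexivity | exact Hs].
  - intros n1 n2 n3 G L Ga De La t u r A B s s' HA HMa IHa HB HMb IHb HT IHT E Hs d c; simpl.
    eapply T_app; [exact HA | apply IHa | exact HB | apply IHb | | | exact Hs].
    apply T_envEq with (1 := IHT d (S c)); apply shiftE_ext.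
    rewrite E, !shiftE_union. reflexivity.
  - intros G t E d c. apply Ms_nil. rewrite E. apply shiftE_empty.
  - intros n m G1 G2 G t s M HT IHT HM IHM E d c. eapply Ms_cons; [apply IHT|apply IHM|].
    rewrite E, shiftE_union. reflexivity.
Qed.

Lemma T_shift n G t s d c : T n G t s -> T n (shiftE d c G) (shift d c t) s.
Proof. intros; apply T_shift_all; auto. Qed.
Lemma Ms_shift n G t A d c : Ms n G t A -> Ms n (shiftE d c G) (shift d c t) A.
Proof. intros; apply T_shift_all; auto. Qed.

Definition SubP (n : nat) (G : env) (t : term) (s : ty) :=
  forall k u m H, Ms m H u (G k) ->
  exists n', n' <= n + m /\ T n' (env_union (dropE k G) (shiftE k 0 H)) (subst k u t) s.
Definition SubPM (n : nat) (G : env) (t : term) (A : list ty) :=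
  forall k u m H, Ms m H u (G k) ->
  exists n', n' <= n + m /\ Ms n' (env_union (dropE k G) (shiftE k 0 H)) (subst k u t) A.

Lemma Ms_nil_inv m H u : Ms m H u [] -> m = 0 /\ envEq H empty.
Proof. intro HM; inversion HM; subst; auto. Qed.

Lemma Ms_one_inv m H u s : Ms m H u [s] -> exists H1 H2 m1, m = m1 /\ T m1 H1 u s /\ envEq H (env_union H1 H2) /\ envEq H2 empty.
Proof. intro HM; inversion HM as [|k m' G1 G2 G' t' s' M HT HM' E]; subst.
  apply Ms_nil_inv in HM' as [-> E2]. exists G1, G2, k. repeat split; auto. Qed.

Lemma T_subst_all :
  (forall n G t s, T n G t s -> SubP n G t s) /\ (forall n G t A, Ms n G t A -> SubPM n G t A).
Proof.
  apply (TMs_mut (fun n G t s _ => SubP n G t s) (fun n G t A _ => SubPM n G t A)); unfold SubP, SubPM.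
  - intros G J x s E k u m H HM. simpl.
    destruct (Nat.eqb_spec x k) as [->|Hne].
    + apply Ms_meq with (A' := [s] ++ J k) in HM.
      2: { rewrite (E k). unfold env_union, env_single. rewrite Nat.eqb_refl. reflexivity. }
      apply Ms_split in HM as (m1 & m2 & H1 & H2 & -> & EH & HM1 & HM2).
      apply Ms_one_inv in HM1 as (K1 & K2 & m1' & -> & HT & EK & EK2).
      exists m1'. split. lia.
      apply (T_shift _ _ _ _ k 0) in HT.
      apply T_weak with (H := env_union (dropE k J) (shiftE k 0 H2)) in HT.
      rewrite E, EH, EK, EK2, dropE_union, dropE_single_eq, !shiftE_union, shiftE_empty.
      eapply T_envEq; [exact HT|]. env_ac.
    + exists 1. split. lia.
      rewrite E, dropE_union, (dropE_single_neq _ _ _ Hne).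
      destruct (k <? x); eapply T_var with (J := env_union (dropE k J) (shiftE k 0 H)); env_ac.
  - intros n G G' t M s s' HT IH E Hs k u m H HM. simpl.
    apply Ms_meq with (A' := G k) in HM; [|exact (E k)].
    destruct (IH (S k) u m H HM) as (n' & Hn' & HT').
    exists (S n'). split. lia.
    rewrite E. eapply T_abs; [|reflexivity|exact Hs].
    rewrite dropE_ext, shiftE_S0, ext_union, app_nil_r in HT'. exact HT'.
  - intros n1 n2 n3 G L Ga De La t u r A B s s' HA HMa IHa HB HMb IHb HT IHT E Hs k v m H HM. simpl.
    apply Ms_meq with (A' := Ga k ++ (De k ++ La k)) in HM; [|exact (E k)].
    apply Ms_split in HM as (m1 & m23 & H1 & H23 & -> & EH & HM1 & HM23).
    apply Ms_split in HM23 as (m2 & m3 & H2 & H3 & -> & EH' & HM2 & HM3).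
    destruct (IHa k v m1 H1 HM1) as (n1' & Hn1 & HMa').
    destruct (IHb k v m2 H2 HM2) as (n2' & Hn2 & HMb').
    destruct (IHT (S k) v m3 H3 HM3) as (n3' & Hn3 & HT').
    exists (S (n1' + n2' + n3')). split. lia.
    rewrite dropE_ext, shiftE_S0, ext_union, app_nil_r in HT'.
    eapply T_app; [exact HA|exact HMa'|exact HB|exact HMb'|exact HT'| |exact Hs].
    rewrite E, EH, EH', !dropE_union, !shiftE_union. env_ac.
  - intros G t E k u m H HM.
    apply Ms_meq with (A' := []) in HM; [|rewrite (E k); reflexivity].
    apply Ms_nil_inv in HM as [-> EH]. exists 0. split. lia.
    apply Ms_nil. rewrite E, EH, dropE_empty, shiftE_empty. apply union_empty_l.
  - intros n m0 G1 G2 G t s M HT IHT HM IHM E k u m H HMu.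
    apply Ms_meq with (A' := G1 k ++ G2 k) in HMu; [|exact (E k)].
    apply Ms_split in HMu as (m1 & m2 & H1 & H2 & -> & EH & HM1 & HM2).
    destruct (IHT k u m1 H1 HM1) as (n' & Hn & HT').
    destruct (IHM k u m2 H2 HM2) as (n'' & Hn' & HM').
    exists (n' + n''). split. lia.
    eapply Ms_cons; [exact HT'|exact HM'|].
    rewrite E, EH, dropE_union, shiftE_union. env_ac.
Qed.

Lemma T_subst n G t s k u m H : T n G t s -> Ms m H u (G k) ->
  exists n', n' <= n + m /\ T n' (env_union (dropE k G) (shiftE k 0 H)) (subst k u t) s.
Proof. intros HT; apply T_subst_all; auto. Qed.
Lemma Ms_subst n G t A k u m H : Ms n G t A -> Ms m H u (G k) ->
  exists n', n' <= n + m /\ Ms n' (env_union (dropE k G) (shiftE k 0 H)) (subst k u t) A.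
Proof. intros HT; apply T_subst_all; auto. Qed.

Lemma plug_lemma D : forall n G v s, T n G (plug D v) s ->
  exists G0 s0 n0, n0 <= n /\ teq s0 s /\ T n0 G0 v s0 /\
    forall v' s' H m, T m (env_union G0 (shiftE (length D) 0 H)) v' s' ->
      T (n - n0 + m) (env_union G H) (plug D v') s'.
Proof.
  induction D as [|[a b] D IH]; intros n G v s HT; simpl in *.
  - exists G, s, n. split; auto. split. reflexivity. split; auto.
    intros v' s' H m HT'. rewrite shiftE_00 in HT'. replace (n - n + m) with m by lia. exact HT'.
  - inversion HT as [| |n1 n2 n3 G' L Ga De La t u r A B s1 s' HA HMa HB HMb HTr E Hs]; subst.
    destruct (IH _ _ _ _ HTr) as (G0 & s0 & n0 & Hn0 & Hs0 & HT0 & Hreb).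
    exists G0, s0, n0. split. lia. split. rewrite Hs0, Hs. reflexivity. split; auto.
    intros v' s'' H m HT'. rewrite <- shiftE_ext_nil in HT'.
    apply Hreb in HT'. rewrite ext_union, app_nil_r in HT'.
    replace (S (n1 + n2 + n3) - n0 + m) with (S (n1 + n2 + (n3 - n0 + m))) by lia.
    eapply T_app; [exact HA|exact HMa|exact HB|exact HMb|exact HT'| |reflexivity].
    rewrite E. env_ac.
Qed.

Lemma root_aux D t u : forall L n1 Ga n2 De,
  Ms n1 Ga (plug D (Lam t)) (arrs L) -> Ms n2 De u (concat (map fst L)) ->
  exists m, m + length L <= n1 + n2 /\
    Ms m (env_union Ga De) (plug D (subst0 (shift (length D) 0 u) t)) (map snd L).
Proof.
  induction L as [|[M1 tau1] L IH]; intros n1 Ga n2 De HMa HMb; simpl in *.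
  - apply Ms_nil_inv in HMa as [-> Ea]. apply Ms_nil_inv in HMb as [-> Eb].
    exists 0. split. lia. apply Ms_nil. rewrite Ea, Eb. apply union_empty_l.
  - inversion HMa as [|k ra Ga1 Ga2 Ga' t' s' M' HT HMa' Ea]; subst.
    apply Ms_split in HMb as (d1 & rd & De1 & De2 & -> & Eb & HMd1 & HMd2).
    destruct (plug_lemma _ _ _ _ _ HT) as (G0 & s0 & n0 & Hn0 & Hs0 & HT0 & Hreb).
    inversion HT0 as [|n0' G1 G0' t1 M'' sg s0' HTt E1 Hs1|]; subst.
    assert (Hteq : teq (Arr M'' sg) (Arr M1 tau1)) by (rewrite <- Hs1; exact Hs0).
    inversion Hteq as [|? ? ? ? HMM Hsg]; subst.
    apply (Ms_shift _ _ _ _ (length D) 0) in HMd1.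
    apply Ms_meq with (A' := M'') in HMd1; [|symmetry; exact HMM].
    destruct (T_subst _ _ _ _ 0 _ _ _ HTt HMd1) as (n'' & Hn'' & HTs).
    rewrite dropE_0_ext, shiftE_00, <- E1 in HTs.
    apply (T_teq _ _ _ _ tau1) in HTs; [|exact Hsg].
    apply Hreb in HTs.
    destruct (IH _ _ _ _ HMa' HMd2) as (m' & Hm' & HMr).
    exists (k - S n0' + n'' + m'). split. lia.
    eapply Ms_cons; [exact HTs|exact HMr|]. rewrite Ea, Eb. env_ac.
Qed.

Lemma ch_nonempty X A : ch_rel X A -> A <> [].
Proof. intros [[HX HA]|[_ [tau ->]]]; [|discriminate].
  intro; subst. apply meq_nil_l in HA. contradiction. Qed.

Lemma Ms_red t t' : (forall n G s, T n G t s -> exists n', n' < n /\ T n' G t' s) ->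
  forall n G A, Ms n G t A -> exists n', n' + length A <= n /\ Ms n' G t' A.
Proof.
  intros Hred n G A HM; induction HM as [G t0 E|k m G1 G2 G t0 s M HT HM IH E].
  - exists 0; split; simpl; auto. apply Ms_nil; auto.
  - destruct (Hred _ _ _ HT) as (k' & Hk & HT').
    destruct (IH Hred) as (m' & Hm & HM').
    exists (k' + m'). simpl. split. lia. eapply Ms_cons; eauto.
Qed.

Lemma Ms_red_strict t t' X n G A : (forall n G s, T n G t s -> exists n', n' < n /\ T n' G t' s) ->
  ch_rel X A -> Ms n G t A -> exists n', n' < n /\ Ms n' G t' A.
Proof.
  intros Hred HA HM. destruct (Ms_red t t' Hred _ _ _ HM) as (n' & Hn & HM').
  exists n'; split; auto. apply ch_nonempty in HA. destruct A; [contradiction|simpl in Hn; lia].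
Qed.

Lemma SR t t' : dbeta t t' -> forall n G s, T n G t s -> exists n', n' < n /\ T n' G t' s.
Proof.
  induction 1 as [t t' Hr|t t' Hd IH|t t' u r Hd IH|t u u' r Hd IH|t u r r' Hd IH];
    intros n G s HT.
  - destruct Hr as [D t0 u r].
    inversion HT as [| |n1 n2 n3 G' L Ga De La t1 u1 r1 A B s1 s' HA HMa HB HMb HTr E Hs]; subst.
    destruct L as [|p L'].
    + simpl in HTr.
      destruct (T_subst _ _ _ _ 0 (plug D (subst0 (shift (length D) 0 u) t0)) 0 empty HTr
                  (Ms_nil _ _ (envEq_refl _))) as (n' & Hn' & HT').
      exists n'. split. lia.
      rewrite dropE_0_ext, shiftE_00, union_empty_r in HT'.
      apply T_weak with (H := env_union Ga De) in HT'.
      apply (T_teq _ _ _ _ s) in HT'; [|symmetry; exact Hs].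
      unfold subst0. rewrite E. eapply T_envEq; [exact HT'|]. env_ac.
    + assert (HA' : meq A (arrs (p :: L'))).
      { destruct HA as [[_ H]|[H _]]; [exact H|discriminate]. }
      apply (Ms_meq _ _ _ _ _ HMa) in HA'.
      assert (HB' : exists De' J n2', n2' <= n2 /\ envEq De (env_union De' J) /\
                      Ms n2' De' u (concat (map fst (p :: L')))).
      { destruct HB as [[_ HBm]|[Hc _]].
        - exists De, empty, n2. split; auto. split. symmetry; apply union_empty_r.
          eapply Ms_meq; eauto.
        - exists empty, De, 0. split. lia. split. symmetry; apply union_empty_l.
          rewrite Hc. apply Ms_nil. reflexivity. }
      destruct HB' as (De' & J & n2' & Hn2 & EDe & HMb').
      destruct (root_aux _ _ _ _ _ _ _ _ HA' HMb') as (m & Hm & HMx).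
      destruct (T_subst _ _ _ _ 0 _ _ _ HTr HMx) as (n' & Hn' & HT').
      exists n'. split. simpl in Hm. lia.
      rewrite dropE_0_ext, shiftE_00 in HT'.
      apply T_weak with (H := J) in HT'.
      apply (T_teq _ _ _ _ s) in HT'; [|symmetry; exact Hs].
      unfold subst0. rewrite E, EDe. eapply T_envEq; [exact HT'|]. env_ac.
  - inversion HT as [|n0 G0 G' t0 M s0 s' HT0 E Hs|]; subst.
    destruct (IH _ _ _ HT0) as (n' & Hn & HT').
    exists (S n'). split. lia. eapply T_abs; eauto.
  - inversion HT as [| |n1 n2 n3 G' L Ga De La t1 u1 r1 A B s1 s' HA HMa HB HMb HTr E Hs]; subst.
    destruct (Ms_red_strict _ _ _ _ _ _ IH HA HMa) as (n' & Hn & HM').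
    exists (S (n' + n2 + n3)). split. lia. eapply T_app; eauto.
  - inversion HT as [| |n1 n2 n3 G' L Ga De La t1 u1 r1 A B s1 s' HA HMa HB HMb HTr E Hs]; subst.
    destruct (Ms_red_strict _ _ _ _ _ _ IH HB HMb) as (n' & Hn & HM').
    exists (S (n1 + n' + n3)). split. lia. eapply T_app; eauto.
  - inversion HT as [| |n1 n2 n3 G' L Ga De La t1 u1 r1 A B s1 s' HA HMa HB HMb HTr E Hs]; subst.
    destruct (IH _ _ _ HTr) as (n' & Hn & HT').
    exists (S (n1 + n2 + n')). split. lia. eapply T_app; eauto.
Qed.

Scheme typ_mut := Induction for typ Sort Prop with many_mut := Induction for many Sort Prop.
Combined Scheme typ_many_mut from typ_mut, many_mut.

Lemma typ_T : (forall G t s, typ G t s -> exists n, T n G t s) /\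
              (forall G t A, many G t A -> exists n, Ms n G t A).
Proof.
  apply (typ_many_mut (fun G t s _ => exists n, T n G t s) (fun G t A _ => exists n, Ms n G t A)).
  - intros G x s E. exists 1. eapply T_var with (J := empty). rewrite union_empty_r. exact E.
  - intros G G' t M s s' _ [n HT] E Hs. exists (S n). eapply T_abs; eauto.
  - intros G L Ga De La t u r A B s s' HA _ [n1 H1] HB _ [n2 H2] _ [n3 H3] E Hs.
    exists (S (n1 + n2 + n3)). eapply T_app; eauto.
  - intros G t s _ [n HT]. exists (n + 0). eapply Ms_cons; [exact HT|apply Ms_nil; reflexivity|].
    symmetry; apply union_empty_r.
  - intros G1 G2 t s M _ [n HT] _ [m HM]. exists (n + m). eapply Ms_cons; eauto. reflexivity.
Qed.

Lemma T_SN n : forall G t s, T n G t s -> SN_dbeta t.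
Proof.
  induction n as [n IH] using (well_founded_induction lt_wf).
  intros G t s HT [f [H0 Hf]]. subst t.
  destruct (SR _ _ (Hf 0) _ _ _ HT) as (n' & Hn & HT').
  apply (IH n' Hn _ _ _ HT'). exists (fun k => f (S k)). split; auto.
Qed.

Theorem mainTheorem10 :
  forall (t : term), (exists (G : env) (s : ty), typ G t s) -> SN_dbeta t.
Proof.
  intros t (G & s & H). destruct (proj1 typ_T _ _ _ H) as [n HT]. eapply T_SN; eauto.
Qed.
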